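(* Let $(\mathcal T_0,\mathfrak c)$ be an $(N{+}1)$-colored initial triangulation in $\mathbb R^n$ and let $T\in\mathbb T$. Then every edge $e\in\mathcal E(T)$ with $e\ne\mathrm{bse}(T)$ satisfies $g^\sharp(e)>g^\sharp(\mathrm{bse}(T))$. More generally, for every $m$-subsimplex $S\subset T$ with $m\ge1$ and every edge $e$ of $S$ with $e\ne\mathrm{bse}(S)$, $g^\sharp(e)>g^\sharp(\mathrm{bse}(S))$.
   Context: $n\ge2$, $N\ge n$. An $(N{+}1)$-colored triangulation is a conforming triangulation $\mathcal T_0$ of a polyhedral domain in $\mathbb R^n$ with $\mathfrak c:\mathcal V(\mathcal T_0)\to\{0,\dots,N\}$ giving distinct colors to the vertices of each simplex. Each vertex $v$ has an integer generation $g(v)$, with level $\ell(v)\in\mathbb Z$ and type $t(v)\in\{1,\dots,N\}$ defined by $g(v)=N(\ell(v)-1)+t(v)$; initial vertices have $g(v)=-\mathfrak c(v)$. For an $m$-simplex $S=[v_0,\dots,v_m]$ ($1\le m\le n$) with $g(v_0)>\dots>g(v_m)$: if $\ell(v_m)\ne\ell(v_{m-1})$ then $\mathrm{bse}(S)=[v_{m-1},v_m]$ and the midpoint $\mathrm{bsv}(S)$ has generation $g(v_{m-1})+N$; otherwise, with $j=\min\{k:\ell(v_k)=\ell(v_m)\}$, $\mathrm{bse}(S)=[v_j,v_m]$ and $g(\mathrm{bsv}(S))=g(v_m)+2N+1-t(v_j)$. Define $g^\sharp(S)=g(\mathrm{bsv}(S))$ (in particular for edges, $m=1$). Bisecting an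 $n$-simplex replaces one endpoint of its bisection edge by the midpoint, producing two children. $\mathrm{Refine}(\mathcal T,T)$: with $e=\mathrm{bse}(T)$ and $\omega(e)$ the simplices containing edge $e$, if some $T'\in\omega(e)$ has $\mathrm{bse}(T')\ne e$ return $\mathrm{Refine}(\mathrm{Refine}(\mathcal T,T'),T)$, else bisect all of $\omega(e)$. $\mathbb T$ is the set of all simplices in triangulations obtained from $\mathcal T_0$ by finitely many refinements. $\mathcal E(T)$ is the edge set of $T$. *)

(* Defs.v *)
From HB Require Import structures.
From mathcomp Require Import all_boot all_order all_algebra.
From mathcomp Require Import finmap.
From mathcomp Require Import all_classical all_reals all_analysis.
Import numFieldNormedType.Exports.
Set Implicit Arguments. Unset Strict Implicit. Unset Printing Implicit Defensive.
Import Order.TTheory GRing.Theory Num.Theory.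
Local Open Scope classical_set_scope.
Local Open Scope ring_scope.

Section Bisection.
Variables (R : realType) (n N : nat).

Local Notation pt := 'rV[R]_n.
(* a simplex (or sub-simplex, edge) is given by its finite set of vertices *)
Local Notation simplex := {fset pt}.
Local Notation triang := {fset simplex}.
Local Notation genmap := (pt -> int).

Definition conv (S : simplex) : set pt :=
  [set x | exists l : pt -> R, (forall v, v \in S -> 0 <= l v) /\
     \sum_(v <- S) l v = 1 /\ x = \sum_(v <- S) l v *: v].

Definition aff_indep (S : simplex) : Prop :=
  forall l : pt -> R, \sum_(v <- S) l v = 0 -> \sum_(v <- S) l v *: v = 0 ->
    forall v, v \in S -> l v = 0.

Definition nsimplex (T : simplex) : Prop := #|` T| = n.+1 /\ aff_indep T.

Definition conforming (Tr : triang) : Prop :=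
  (forall T, T \in Tr -> nsimplex T) /\
  (forall T1 T2, T1 \in Tr -> T2 \in Tr ->
     conv T1 `&` conv T2 = conv (fsetI T1 T2)).

Definition mesh_domain (Tr : triang) : set pt :=
  [set x | exists2 T, T \in Tr & conv T x].

Definition triangulation_of_domain (Tr : triang) : Prop :=
  conforming Tr /\ Tr != fset0 /\
  exists Omega : set pt, open Omega /\ connected Omega /\
     closure Omega = mesh_domain Tr.

(* level and type: g = N (lev - 1) + typ with typ in {1..N} *)
Definition lev (k : int) : int := ((k - 1) %/ N%:Z)%Z + 1.
Definition typ (k : int) : int := ((k - 1) %% N%:Z)%Z + 1.

(* vertices sorted by decreasing generation: v_0, ..., v_m *)
Definition gsort (g : genmap) (S : simplex) : seq pt :=
  sort (fun x y => (g y <= g x)%R) (enum_fset S).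

Definition bse_data (g : genmap) (S : simplex) : simplex * int :=
  let s := gsort g S in
  let m := (size s).-1 in
  let vm := nth 0 s m in
  let vm1 := nth 0 s m.-1 in
  if lev (g vm) != lev (g vm1) then ([fset vm1; vm]%fset, g vm1 + N%:Z)
  else
    let vj := nth 0 s (find (fun v => lev (g v) == lev (g vm)) s) in
    ([fset vj; vm]%fset, g vm + (2 * N)%:Z + 1 - typ (g vj)).

Definition bse (g : genmap) (S : simplex) : simplex := (bse_data g S).1.
Definition gsharp (g : genmap) (S : simplex) : int := (bse_data g S).2.

Definition bsv (g : genmap) (S : simplex) : pt :=
  2^-1 *: \sum_(v <- bse g S) v.

Definition omega (Tr : triang) (e : simplex) : triang :=
  [fset T in Tr | fsubset e T]%fset.

Definition children (g : genmap) (T : simplex) : triang :=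
  let z := bsv g T in
  [fset fsetU [fset z]%fset (fsetD T [fset a]%fset) | a in bse g T]%fset.

Definition bisect_all (Tr : triang) (g : genmap) (T : simplex) : triang :=
  let W := omega Tr (bse g T) in
  (fsetD Tr W `|` \bigcup_(T' <- enum_fset W) children g T')%fset.

Definition new_gen (g : genmap) (T : simplex) : genmap :=
  let z := bsv g T in fun x => if x == z then gsharp g T else g x.

(* Refine(Tr, T), as a (possibly nondeterministic) big-step relation:
   refine Tr g T Tr' g'  means that the call Refine(Tr,T) (current
   generations g) returns the triangulation Tr' (new generations g'). *)
Inductive refine : triang -> genmap -> simplex -> triang -> genmap -> Prop :=
| refine_bisect Tr g T :
    (forall T', T' \in omega Tr (bse g T) -> bse g T' = bse g T) ->
    refine Tr g T (bisect_all Tr g T) (new_gen g T)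
| refine_rec Tr g T T' Tr1 g1 Tr2 g2 :
    T' \in omega Tr (bse g T) -> bse g T' != bse g T ->
    refine Tr g T' Tr1 g1 -> refine Tr1 g1 T Tr2 g2 ->
    refine Tr g T Tr2 g2.

Inductive reachable (Tr0 : triang) (g0 : genmap) : triang -> genmap -> Prop :=
| reach0 : reachable Tr0 g0 Tr0 g0
| reach_step Tr g T Tr' g' :
    reachable Tr0 g0 Tr g -> T \in Tr -> refine Tr g T Tr' g' ->
    reachable Tr0 g0 Tr' g'.

Definition coloring (Tr : triang) (c : pt -> 'I_N.+1) : Prop :=
  forall T, T \in Tr -> {in T &, injective c}.

Definition init_gen (c : pt -> 'I_N.+1) : genmap := fun v => - (c v : nat)%:Z.

End Bisection.

(* Main.v *)
Require Import Defs.
Set Warnings "-all".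
From HB Require Import structures.
From mathcomp Require Import all_boot all_order all_algebra.
From mathcomp Require Import finmap.
From mathcomp Require Import all_classical all_reals all_analysis.
From mathcomp Require Import zify ring lra.
Import numFieldNormedType.Exports.
Import Order.TTheory GRing.Theory Num.Theory.
Set Implicit Arguments. Unset Strict Implicit. Unset Printing Implicit Defensive.
Local Open Scope ring_scope.

Section Lev.
Variable N : nat.
Hypothesis N0 : (0 < N)%N.

Lemma levtyp_eq (k : int) : k = N%:Z * (lev N k - 1) + typ N k.
Proof.
rewrite /lev /typ.
have := divz_eq (k - 1) N%:Z.
set q := ((k - 1) %/ N%:Z)%Z; set r := ((k - 1) %% N%:Z)%Z.
nia.
Qed.

Lemma typ_bnd (k : int) : 1 <= typ N k <= N%:Z.
Proof.
rewrite /typ.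
have h1 : 0 <= ((k - 1) %% N%:Z)%Z by apply: modz_ge0; lia.
have h2 : ((k - 1) %% N%:Z)%Z < N%:Z by apply: ltz_pmod; lia.
lia.
Qed.

Lemma lev_lt (a b : int) : lev N a < lev N b -> a - typ N a + N%:Z <= b - typ N b.
Proof.
move=> h.
have ea := levtyp_eq a; have eb := levtyp_eq b.
have : N%:Z * (lev N a - 1) + N%:Z <= N%:Z * (lev N b - 1).
  have -> : N%:Z * (lev N a - 1) + N%:Z = N%:Z * (lev N a) by ring.
  apply: ler_wpM2l; [lia|lia].
lia.
Qed.

Lemma lev_eq (a b : int) : lev N a = lev N b -> a - typ N a = b - typ N b.
Proof.
move=> h; have ea := levtyp_eq a; have eb := levtyp_eq b.
rewrite h in ea; lia.
Qed.

Lemma lev_le (a b : int) : a <= b -> lev N a <= lev N b.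
Proof.
move=> h; case: (lerP (lev N a) (lev N b)) => // /lev_lt.
have := typ_bnd a; have := typ_bnd b; lia.
Qed.

End Lev.
Section Comb.
Variables (R : realType) (n N : nat).
Local Notation pt := 'rV[R]_n.

Lemma bse_spec (g : pt -> int) (S : {fset pt}) : {in S &, injective g} -> (2 <= #|`S|)%N ->
  exists w u2 vj, [/\ w \in S, u2 \in S, vj \in S, u2 != w &
   [/\ (forall v, v \in S -> v != w -> g w < g v),
       (forall v, v \in S -> v != w -> v != u2 -> g u2 < g v),
       lev N (g vj) = lev N (g w),
       (forall v, v \in S -> lev N (g v) = lev N (g w) -> g v <= g vj) &
       bse_data N g S = if lev N (g w) != lev N (g u2) then ([fset u2; w]%fset, g u2 + N%:Z)
                        else ([fset vj; w]%fset, g w + (2*N)%:Z + 1 - typ N (g vj))]].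
Proof.
move=> ginj cardS.
set r := (fun x y : pt => (g y <= g x)%R).
have rtot : total r by move=> x y; rewrite /r le_total.
have rtr : transitive r by move=> x y z; rewrite /r => h1 h2; apply: le_trans h2 h1.
have rrefl : reflexive r by move=> x; rewrite /r.
set s := gsort g S.
have se : s = sort r (enum_fset S) by [].
have ssort : sorted r s by rewrite se; apply: sort_sorted.
have suniq : uniq s by rewrite se sort_uniq fset_uniq.
have smem : forall x, (x \in s) = (x \in S) by move=> x; rewrite se mem_sort.
have ssize : size s = #|`S| by rewrite se size_sort.
have sle : forall i j, (i < size s)%N -> (j < size s)%N -> (i <= j)%N ->
    g (nth 0 s j) <= g (nth 0 s i).
  by move=> i j hi hj hij; apply: (sorted_leq_nth rtr rrefl 0 ssort).
have slt : forall i j, (i < size s)%N -> (j < size s)%N -> (i < j)%N ->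
    g (nth 0 s j) < g (nth 0 s i).
  move=> i j hi hj hij; rewrite lt_neqAle sle ?(ltnW hij) // andbT.
  apply/negP => /eqP /ginj; rewrite -!smem !mem_nth // => /(_ isT isT) /eqP.
  by rewrite nth_uniq // => /eqP hji; move: hij; rewrite hji ltnn.
have sidx : forall v, v \in S -> (index v s < size s)%N /\ nth 0 s (index v s) = v.
  by move=> v; rewrite -smem => vs; rewrite index_mem nth_index.
set m := (size s).-1.
have hm : (m < size s)%N by rewrite /m ssize; case: #|`S| cardS.
have hm1 : (m.-1 < m)%N by rewrite /m ssize; case: #|`S| cardS => // -[] //.
set w := nth 0 s m.
set u2 := nth 0 s m.-1.
set P := (fun v => lev N (g v) == lev N (g w)).
have wS : w \in S by rewrite -smem mem_nth.
have hasP : has P s by apply/hasP; exists w; rewrite ?smem // /P.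
set vj := nth 0 s (find P s).
have fs : (find P s < size s)%N by rewrite -has_find.
exists w, u2, vj; split.
- exact: wS.
- by rewrite -smem mem_nth // (ltn_trans hm1 hm).
- by rewrite -smem mem_nth.
- rewrite /u2 /w nth_uniq // ?(ltn_trans hm1 hm) //.
  by apply/eqP => h; move: hm1; rewrite h ltnn.
split.
- move=> v vS vw; have [hi hn] := sidx v vS; rewrite -hn; apply: slt => //.
  rewrite ltn_neqAle -ltnS -/m.
  have -> : m.+1 = size s by rewrite /m prednK // ssize; case: #|`S| cardS.
  rewrite hi andbT; apply/eqP => h; move: vw; rewrite -hn h eqxx.
  by [].
- move=> v vS vw vu; have [hi hn] := sidx v vS; rewrite -hn; apply: slt => //.
  + exact: (ltn_trans hm1 hm).
  have h1 : index v s != m by apply/eqP => h; move: vw; rewrite -hn h eqxx.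
  have h2 : index v s != m.-1 by apply/eqP => h; move: vu; rewrite -hn h eqxx.
  have h3 : (index v s <= m)%N.
    by rewrite -ltnS /m prednK // ssize; case: #|`S| cardS.
  move: h1 h2 h3 hm1; clear; lia.
- by apply/eqP; apply: (nth_find 0 hasP).
- move=> v vS hv; have [hi hn] := sidx v vS; rewrite -hn; apply: sle => //.
  rewrite leqNgt; apply/negP => /(before_find 0); rewrite hn /P hv eqxx.
  by [].
- by rewrite /bse_data -/s.
Qed.

End Comb.
Section Comb2.
Variables (R : realType) (n N : nat).
Hypothesis N0 : (0 < N)%N.
Local Notation pt := 'rV[R]_n.

Lemma AF (a b : int) : (lev N a < lev N b -> a - typ N a + N%:Z <= b - typ N b) /\
  (lev N a = lev N b -> a - typ N a = b - typ N b) /\ (a <= b -> lev N a <= lev N b) /\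
  (1 <= typ N a <= N%:Z).
Proof.
split; first exact: lev_lt.
split; first exact: lev_eq.
split; first exact: lev_le.
exact: typ_bnd.
Qed.

Lemma card2P (e : {fset pt}) : #|`e| = 2%N -> exists x y, x != y /\ e = [fset x; y]%fset.
Proof.
move=> he.
have : size (enum_fset e) = 2%N by rewrite -he.
case E: (enum_fset e) => [|x [|y []]] //= _.
have u := fset_uniq e; rewrite E /= inE andbT in u.
exists x, y; split => //.
apply/fsetP => z; have -> : (z \in e) = (z \in enum_fset e) by [].
by rewrite E !inE.
Qed.

Lemma edge_spec (g : pt -> int) x y : x != y -> g y < g x ->
  bse_data N g [fset x; y]%fset =
  if lev N (g x) != lev N (g y) then ([fset x; y]%fset, g x + N%:Z)
  else ([fset x; y]%fset, g y + (2*N)%:Z + 1 - typ N (g x)).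
Proof.
move=> xy gxy.
have inj : {in [fset x; y]%fset &, injective g}.
  move=> a b; rewrite !inE => /orP[]/eqP-> /orP[]/eqP-> // h;
  by move: gxy; rewrite h ltxx.
have c2 : (2 <= #|`[fset x; y]%fset|)%N by rewrite cardfs2 xy.
have [w [u2 [vj [wS uS vS uw [hw hu hl hv ->]]]]] := bse_spec N inj c2.
have wy : w = y.
  move: wS; rewrite !inE => /orP[]/eqP // wx.
  have := hw y; rewrite !inE eqxx orbT wx eq_sym xy => /(_ isT isT) h.
  by move: (lt_trans h gxy); rewrite ltxx.
have ux : u2 = x.
  move: uS uw; rewrite !inE wy => /orP[]/eqP -> //; by rewrite eqxx.
rewrite wy ux.
rewrite [lev N (g y) == _]eq_sym.
case: ifP => [_ //|hh].
have hlev : lev N (g x) = lev N (g y).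
  by apply/eqP; move: hh; case: (_ == _).
have vx : vj = x.
  move: vS; rewrite !inE => /orP[]/eqP // vy.
  have := hv x; rewrite !inE eqxx wy hlev => /(_ isT erefl).
  by rewrite vy => h; move: (lt_le_trans gxy h); rewrite ltxx.
by rewrite vx fsetUC.
Qed.

Lemma neqF (a b : int) : (a != b) = false -> a = b.
Proof. by case: eqP. Qed.

Lemma bse_props (g : pt -> int) (S : {fset pt}) : {in S &, injective g} -> (2 <= #|`S|)%N ->
  [/\ fsubset (bse N g S) S, #|` bse N g S| = 2%N & gsharp N g (bse N g S) = gsharp N g S].
Proof.
move=> inj c2.
have [w [u2 [vj [wS uS vS uw [hw hu hl hv E]]]]] := bse_spec N inj c2.
rewrite /bse /gsharp E.
case: ifP => hA /=.
- have guw : g w < g u2 by apply: hw.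
  rewrite edge_spec // eq_sym hA; split => //.
  + by apply/fsubsetP => z; rewrite !inE => /orP[]/eqP->.
  + by rewrite cardfs2 uw.
- have hl2 := neqF hA.
  have guw : g w < g u2 by apply: hw.
  have gvj : g u2 <= g vj by apply: hv => //; rewrite hl2.
  have vw : vj != w by apply/eqP => h; move: (lt_le_trans guw gvj); rewrite h ltxx.
  rewrite edge_spec //; last exact: (lt_le_trans guw gvj).
  rewrite hl eqxx /=; split => //.
  + by apply/fsubsetP => z; rewrite !inE => /orP[]/eqP->.
  + by rewrite cardfs2 vw.
Qed.

Lemma gsharp_min_xy (g : pt -> int) (S : {fset pt}) x y : {in S &, injective g} -> (2 <= #|`S|)%N ->
  x \in S -> y \in S -> x != y -> g y < g x -> [fset x; y]%fset != bse N g S ->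
  gsharp N g S < gsharp N g [fset x; y]%fset.
Proof.
move=> inj c2 xS yS xy gxy ne.
have [w [u2 [vj [wS uS vS uw [hw hu hl hv E]]]]] := bse_spec N inj c2.
rewrite /bse E in ne; rewrite /gsharp E edge_spec //.
have xw : x != w.
  apply/eqP => h; have := hw y yS; rewrite -h eq_sym xy => /(_ isT) h2.
  by move: (lt_trans h2 gxy); rewrite ltxx.
have gwx : g w < g x by apply: hw.
have gwy : g w <= g y.
  by case: (eqVneq y w) => [->|yw] //; apply/ltW/hw.
have tx := typ_bnd N0 (g x); have ty := typ_bnd N0 (g y); have tw := typ_bnd N0 (g w).
have lwy := lev_le N0 gwy.
have lyx := lev_le N0 (ltW gxy).
case: ifP => hA /=; rewrite hA /= in ne.
- have guw : g w < g u2 by apply: hw.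
  have xu : x != u2.
    apply/eqP => h; case: (eqVneq y w) => [yw|yw].
      by move: ne; rewrite h yw eqxx.
    have := hu y yS yw; rewrite -h eq_sym xy => /(_ isT) h2.
    by move: (lt_trans h2 gxy); rewrite ltxx.
  have gux : g u2 < g x by apply: hu.
  case: ifP => hB /=; first by clear -gux; lia.
  have hxy := neqF hB.
  have yw : y != w.
    apply/eqP => yw; move: hA; rewrite -yw -hxy.
    have l1 := lev_le N0 (ltW gux); have l2 := lev_le N0 (ltW guw).
    rewrite -yw in l2.
    have -> : lev N (g u2) = lev N (g x) by clear -l1 l2 hxy; lia.
    by rewrite eqxx.
  have guy : g u2 <= g y.
    case: (eqVneq y u2) => [->|yu] //.
    by apply/ltW/hu.
  have tu := typ_bnd N0 (g u2).
  have luy := lev_le N0 guy.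
  have exy := lev_eq N0 hxy.
  case: (ltgtP (lev N (g u2)) (lev N (g y))) => h.
  + have := lev_lt N0 h; clear -tx ty tu exy gxy; lia.
  + clear -h luy; lia.
  + have := lev_eq N0 h; clear -tx ty tu exy gxy guy; lia.
- have hl2 := neqF hA.
  have guw : g w < g u2 by apply: hw.
  have gvj : g u2 <= g vj by apply: hv => //; rewrite hl2.
  have gxv : lev N (g x) = lev N (g w) -> g x <= g vj by apply: hv.
  have ewv := lev_eq N0 hl; have tv := typ_bnd N0 (g vj).
  case: ifP => hB /=.
  + have hB' : lev N (g x) <> lev N (g y) by move=> h; move: hB; rewrite h eqxx.
    have h1 : lev N (g w) < lev N (g x) by clear -lwy lyx hB'; lia.
    have := lev_lt N0 h1; clear -tx tw tv ewv guw gvj; lia.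
  + have hxy := neqF hB.
    have exy := lev_eq N0 hxy.
    case: (ltgtP (lev N (g w)) (lev N (g y))) => h.
    * have := lev_lt N0 h; clear -exy tx ty tw tv ewv guw gvj; lia.
    * clear -h lwy; lia.
    * have ewy := lev_eq N0 h.
      have hvx : g x <= g vj by apply: gxv; clear -hxy h; lia.
      have hne : g x <> g vj \/ g y <> g w.
        case: (eqVneq (g x) (g vj)) => hx; last by left; apply/eqP.
        case: (eqVneq (g y) (g w)) => hy; last by right; apply/eqP.
        have exv : x = vj by apply: inj.
        have eyw : y = w by apply: inj.
        by move: ne; rewrite exv eyw eqxx.
      clear -ewy exy hvx ewv gwy hne tx ty tw tv gxy; lia.
Qed.

Lemma gsharp_min (g : pt -> int) (S e : {fset pt}) : {in S &, injective g} -> (2 <= #|`S|)%N ->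
  fsubset e S -> #|`e| = 2%N -> e != bse N g S -> gsharp N g S < gsharp N g e.
Proof.
move=> inj c2 eS ce ne.
have [x [y [xy ee]]] := card2P ce; subst e.
have xS : x \in S by apply: (fsubsetP eS); rewrite !inE eqxx.
have yS : y \in S by apply: (fsubsetP eS); rewrite !inE eqxx orbT.
have gxy : g x != g y by apply: contra xy => /eqP/inj ->.
case: (ltgtP (g x) (g y)) => h; last by move: gxy; rewrite h eqxx.
- rewrite fsetUC; apply: gsharp_min_xy => //; first by rewrite eq_sym.
  by rewrite fsetUC.
- exact: gsharp_min_xy.
Qed.

Lemma edge_gt (g : pt -> int) (e : {fset pt}) : #|`e| = 2%N -> {in e &, injective g} ->
  forall v, v \in e -> g v < gsharp N g e.
Proof.
move=> ce inj.
have [x [y [xy ee]]] := card2P ce; subst e.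
have xS : x \in [fset x; y]%fset by rewrite !inE eqxx.
have yS : y \in [fset x; y]%fset by rewrite !inE eqxx orbT.
have gxy : g x != g y by apply: contra xy => /eqP/inj ->.
suff H : forall x y, x != y -> g y < g x -> g x < gsharp N g [fset x; y]%fset /\ g y < gsharp N g [fset x; y]%fset.
  move=> v; rewrite !inE => /orP[]/eqP->.
  - case: (ltgtP (g x) (g y)) => h; last by move: gxy; rewrite h eqxx.
    + by rewrite fsetUC; case: (H y x) => //; rewrite eq_sym.
    + by case: (H x y).
  - case: (ltgtP (g x) (g y)) => h; last by move: gxy; rewrite h eqxx.
    + by rewrite fsetUC; case: (H y x) => //; rewrite eq_sym.
    + by case: (H x y).
move=> a b ab gab.
rewrite /gsharp edge_spec //.
have ta := typ_bnd N0 (g a); have tb := typ_bnd N0 (g b).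
case: ifP => h /=.
- lia.
- have := lev_eq N0 (neqF h); lia.
Qed.

Lemma bse_data_ext (g1 g2 : pt -> int) (T : {fset pt}) : {in T, g1 =1 g2} ->
  {in T &, injective g1} -> (2 <= #|`T|)%N -> bse_data N g1 T = bse_data N g2 T.
Proof.
move=> e12 inj c2.
have inj2 : {in T &, injective g2}.
  by move=> x y xT yT; rewrite -!e12 //; apply: inj.
have [w [u2 [vj [wS uS vS uw [hw hu hl hv ->]]]]] := bse_spec N inj c2.
have [w' [u2' [vj' [wS' uS' vS' uw' [hw' hu' hl' hv' ->]]]]] := bse_spec N inj2 c2.
have ew : w' = w.
  apply/eqP; apply/negP => /negP nw.
  have := hw w' wS' nw; have := hw' w wS; rewrite eq_sym => /(_ nw).
  rewrite !e12 // => h1 h2; move: (lt_trans h1 h2); rewrite ltxx.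
  by [].
subst w'.
have eu : u2' = u2.
  apply/eqP; apply/negP => /negP nu.
  have := hu u2' uS' uw' nu; have := hu' u2 uS uw; rewrite eq_sym => /(_ nu).
  rewrite !e12 // => h1 h2; move: (lt_trans h1 h2); rewrite ltxx.
  by [].
subst u2'.
have ev : vj' = vj.
  apply: inj => //; apply/eqP; rewrite eq_le; apply/andP; split.
  - apply: hv => //; rewrite e12 // hl' e12 //.
  - rewrite !e12 //; apply: hv' => //; rewrite -!e12 //.
subst vj'.
by rewrite !e12.
Qed.

Lemma gsharp_ext (g1 g2 : pt -> int) (T : {fset pt}) : {in T, g1 =1 g2} ->
  {in T &, injective g1} -> (2 <= #|`T|)%N -> gsharp N g1 T = gsharp N g2 T /\ bse N g1 T = bse N g2 T.
Proof. by move=> *; rewrite /gsharp /bse (@bse_data_ext g1 g2 T). Qed.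

Definition Qg (g : pt -> int) (T : {fset pt}) :=
  {in T &, injective g} /\ forall v, v \in T -> g v < gsharp N g T.

Lemma Q_ext (g1 g2 : pt -> int) (T : {fset pt}) : {in T, g1 =1 g2} -> (2 <= #|`T|)%N ->
  Qg g1 T -> Qg g2 T.
Proof.
move=> e12 c2 [inj hb].
have [G _] := gsharp_ext e12 inj c2.
split; first by move=> x y xT yT; rewrite -!e12 //; apply: inj.
by move=> v vT; rewrite -e12 // -G; apply: hb.
Qed.

Lemma Q_child (g g' : pt -> int) (A : {fset pt}) a z : Qg g A -> (2 <= #|`A|)%N ->
  a \in bse N g A -> z \notin A -> {in A, g' =1 g} -> g' z = gsharp N g A ->
  Qg g' (z |` (A `\ a))%fset.
Proof.
move=> [inj hb] c2 aB zA e' ez.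
have [sB cB eB] := bse_props inj c2.
set C := (z |` (A `\ a))%fset.
have CA : forall v, v \in C -> v != z -> v \in A.
  by move=> v; rewrite !inE => /orP[/eqP->|/andP[_ ->]] //; rewrite eqxx.
have ltz : forall v, v \in C -> v != z -> g' v < g' z.
  by move=> v vC vz; rewrite ez e' ?CA //; apply: hb; apply: CA.
have injC : {in C &, injective g'}.
  move=> u v uC vC; case: (eqVneq u z) => [->|uz]; case: (eqVneq v z) => [->|vz] //.
  - by move=> h; have := ltz v vC vz; rewrite h ltxx.
  - by move=> h; have := ltz u uC uz; rewrite h ltxx.
  - by rewrite !e' ?CA //; apply: inj; apply: CA.
have [p [q [pq Be]]] := card2P cB.
have c2C : (2 <= #|`C|)%N.
  have [b [bC bz]] : exists b, b \in C /\ b != z.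
    move: aB; rewrite Be !inE => /orP[]/eqP ea.
    - exists q; split.
        rewrite !inE; apply/orP; right; rewrite ea eq_sym pq /=.
        by apply: (fsubsetP sB); rewrite Be !inE eqxx orbT.
      apply/eqP => qz; move: zA; rewrite -qz; apply/negP/negPn.
      by apply: (fsubsetP sB); rewrite Be !inE eqxx orbT.
    - exists p; split.
        rewrite !inE; apply/orP; right; rewrite ea pq /=.
        by apply: (fsubsetP sB); rewrite Be !inE eqxx.
      apply/eqP => pz; move: zA; rewrite -pz; apply/negP/negPn.
      by apply: (fsubsetP sB); rewrite Be !inE eqxx.
  have sub : fsubset [fset z; b]%fset C.
    apply/fsubsetP => v; rewrite !inE => /orP[]/eqP->; [by rewrite eqxx | by move: bC; rewrite !inE].
  have := fsubset_leq_card sub; rewrite cardfs2 eq_sym bz.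
  by [].
have key : forall e, fsubset e C -> #|`e| = 2%N -> gsharp N g A < gsharp N g' e.
  move=> e eC ce.
  have injE : {in e &, injective g'}.
    by move=> u v uE vE; apply: injC; apply: (fsubsetP eC).
  case: (boolP (z \in e)) => ze.
  - by rewrite -ez; apply: edge_gt.
  - have eA : fsubset e A.
      apply/fsubsetP => v ve; apply: CA; first exact: (fsubsetP eC).
      by apply: contraNneq ze => <-.
    have e'e : {in e, g' =1 g} by move=> v ve; apply: e'; apply: (fsubsetP eA).
    have injg : {in e &, injective g'} := injE.
    have [-> _] := gsharp_ext e'e injg (eq_leq (esym ce)).
    apply: gsharp_min => //.
    apply/negP => /eqP eb.
    have : a \in e by rewrite eb.
    have : a \notin C.
      rewrite !inE eqxx /= orbF; apply/eqP => az; move: zA; rewrite -az (fsubsetP sB a aB).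
      by [].
    by move=> /negP aC ae; apply: aC; apply: (fsubsetP eC).
have [sBC cBC eBC] := bse_props injC c2C.
have gC : gsharp N g A < gsharp N g' C by rewrite -eBC; apply: key.
split => // v vC.
case: (eqVneq v z) => [->|vz]; first by rewrite ez.
by apply: lt_trans gC; rewrite -ez; apply: ltz.
Qed.
End Comb2.

Section Geo.
Variables (R : realType) (n : nat).
Local Notation pt := 'rV[R]_n.

Lemma sum_supp (A B : {fset pt}) (f : pt -> R) : fsubset A B ->
  (forall v, v \in B -> v \notin A -> f v = 0) -> \sum_(v <- A) f v = \sum_(v <- B) f v.
Proof. by move=> sAB h; apply: big_fset_incl. Qed.

Lemma sumv_supp (A B : {fset pt}) (f : pt -> pt) : fsubset A B ->
  (forall v, v \in B -> v \notin A -> f v = 0) -> \sum_(v <- A) f v = \sum_(v <- B) f v.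
Proof. by move=> sAB h; apply: big_fset_incl. Qed.

Lemma coord_uniq (A : {fset pt}) (l m : pt -> R) : aff_indep A ->
  \sum_(v <- A) l v = \sum_(v <- A) m v ->
  \sum_(v <- A) l v *: v = \sum_(v <- A) m v *: v -> forall v, v \in A -> l v = m v.
Proof.
move=> ai h1 h2 v vA; apply/eqP; rewrite -subr_eq0; apply/eqP.
apply: (ai (fun v => l v - m v)) => //.
- by rewrite sumrB h1 subrr.
- under eq_bigr do rewrite scalerBl.
  by rewrite sumrB h2 subrr.
Qed.

Lemma conv_supp (D E : {fset pt}) (nu : pt -> R) x :
  (forall v, v \in D -> 0 <= nu v) -> \sum_(v <- D) nu v = 1 ->
  x = \sum_(v <- D) nu v *: v -> (forall v, v \in D -> v \notin E -> nu v = 0) ->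
  Defs.conv E x.
Proof.
move=> h0 h1 hx hz.
pose l v := if v \in D then nu v else 0.
exists l; split; first by move=> v _; rewrite /l; case: ifP => // /h0.
have sD : fsubset D (D `|` E)%fset by apply: fsubsetUl.
have sE : fsubset E (D `|` E)%fset by apply: fsubsetUr.
have eD : forall v, v \in D -> l v = nu v by move=> v vD; rewrite /l vD.
split.
- rewrite (@sum_supp E (D `|` E)%fset) //; last first.
    move=> v; rewrite inE /l => /orP[vD|->] // vE; by rewrite vD hz.
  rewrite -(@sum_supp D (D `|` E)%fset) //; last first.
    by move=> v _ vD; rewrite /l (negbTE vD).
  by rewrite -h1; apply: eq_fbigr => v vD _; rewrite eD.
- rewrite (@sumv_supp E (D `|` E)%fset (fun v => l v *: v)) //; last first.
    move=> v; rewrite inE /l => /orP[vD|->] // vE; by rewrite vD hz // scale0r.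
  rewrite -(@sumv_supp D (D `|` E)%fset (fun v => l v *: v)) //; last first.
    by move=> v _ vD; rewrite /l (negbTE vD) scale0r.
  by rewrite hx; apply: eq_fbigr => v vD _; rewrite eD.
Qed.

Lemma conv_mono (A B : {fset pt}) : fsubset A B -> forall x, Defs.conv A x -> Defs.conv B x.
Proof.
move=> sAB x [l [h0 [h1 hx]]]; apply: (@conv_supp A B l) => //.
by move=> v vA vB; move: vB; rewrite (fsubsetP sAB).
Qed.

End Geo.

Section Geo2.
Variables (R : realType) (n : nat).
Local Notation pt := 'rV[R]_n.

Definition liftc (r o z : pt) (l : pt -> R) (v : pt) : R :=
  if v == r then l z / 2 else if v == o then l o + l z / 2 else l v.

Lemma child_sum (A : {fset pt}) r o z (l : pt -> R) : r \in A -> o \in A -> r != o ->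
  z \notin A -> z = 2^-1 *: (r + o) ->
  \sum_(v <- (z |` (A `\ r))%fset) l v = \sum_(v <- A) liftc r o z l v /\
  \sum_(v <- (z |` (A `\ r))%fset) l v *: v = \sum_(v <- A) liftc r o z l v *: v.
Proof.
move=> rA oA ro zA hz.
have zA' : z \notin (A `\ r)%fset by rewrite in_fsetD1 negb_and zA orbT.
have oA' : o \in (A `\ r)%fset by rewrite in_fsetD1 eq_sym ro.
have eq1 : forall v, v \in ((A `\ r) `\ o)%fset -> liftc r o z l v = l v.
  by move=> v; rewrite !in_fsetD1 /liftc => /andP[/negbTE-> /andP[/negbTE-> _]].
rewrite !big_fsetU1 // !(big_fsetD1 r rA) !(big_fsetD1 o oA') /=.
have s1 : \sum_(v <- ((A `\ r) `\ o)%fset) liftc r o z l v = \sum_(v <- ((A `\ r) `\ o)%fset) l v.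
  by apply: eq_fbigr => v vi _; apply: eq1.
have s2 : \sum_(v <- ((A `\ r) `\ o)%fset) liftc r o z l v *: v = \sum_(v <- ((A `\ r) `\ o)%fset) l v *: v.
  by apply: eq_fbigr => v vi _; rewrite eq1.
rewrite s1 s2.
rewrite /liftc eqxx.
rewrite (eq_sym o r) (negbTE ro) eqxx.
split.
- set S := \sum_(_ <- _) _; lra.
- set S := \sum_(_ <- _) _.
  rewrite hz !scalerDr !scalerA scalerDl.
  by rewrite -!addrA; congr (_ + _); rewrite addrCA.
Qed.

End Geo2.

Section Sums.
Variables (K : choiceType) (V : zmodType).
Lemma sum2 (f : K -> V) a b : a != b -> \sum_(v <- [fset a; b]%fset) f v = f a + f b.
Proof.
move=> ab; rewrite big_fsetU1 ?big_seq_fset1 //.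
by rewrite !inE.
Qed.
Lemma sum3 (f : K -> V) a b c : a != b -> a != c -> b != c ->
  \sum_(v <- [fset a; b; c]%fset) f v = f a + f b + f c.
Proof.
move=> ab ac bc; rewrite -fsetUA big_fsetU1; last by rewrite !inE negb_or ab ac.
by rewrite sum2 //= addrA.
Qed.
End Sums.

Section Geo3.
Variables (R : realType) (n : nat).
Local Notation pt := 'rV[R]_n.

Lemma child_conv_sub (A : {fset pt}) r o z x : r \in A -> o \in A -> r != o ->
  z \notin A -> z = 2^-1 *: (r + o) -> Defs.conv (z |` (A `\ r))%fset x ->
  exists lam : pt -> R, [/\ forall v, v \in A -> 0 <= lam v, \sum_(v <- A) lam v = 1,
     x = \sum_(v <- A) lam v *: v & lam r <= lam o].
Proof.
move=> rA oA ro zA hz [l [h0 [h1 hx]]].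
have [e1 e2] := child_sum l rA oA ro zA hz.
have zC : z \in (z |` (A `\ r))%fset by rewrite !inE eqxx.
have oC : o \in (z |` (A `\ r))%fset by rewrite !inE (eq_sym o r) ro oA orbT.
exists (liftc r o z l); split.
- move=> v vA; rewrite /liftc; case: ifP => vr.
    by have := h0 z zC; lra.
  case: ifP => vo.
    by have := h0 z zC; have := h0 o oC; lra.
  by apply: h0; rewrite !inE vr vA orbT.
- by rewrite -e1.
- by rewrite -e2.
- rewrite /liftc eqxx (eq_sym o r) (negbTE ro) eqxx.
  by have := h0 o oC; lra.
Qed.

Lemma child_conv_sup (A : {fset pt}) r o z x (lam : pt -> R) : r \in A -> o \in A -> r != o ->
  z \notin A -> z = 2^-1 *: (r + o) ->
  (forall v, v \in A -> 0 <= lam v) -> \sum_(v <- A) lam v = 1 ->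
  x = \sum_(v <- A) lam v *: v -> lam r <= lam o ->
  exists l : pt -> R, [/\ forall v, v \in (z |` (A `\ r))%fset -> 0 <= l v,
     \sum_(v <- (z |` (A `\ r))%fset) l v = 1,
     x = \sum_(v <- (z |` (A `\ r))%fset) l v *: v & l o = lam o - lam r].
Proof.
move=> rA oA ro zA hz h0 h1 hx hro.
pose l v := if v == z then 2 * lam r else if v == o then lam o - lam r else lam v.
have [e1 e2] := child_sum l rA oA ro zA hz.
have oz : o != z by apply: contraNneq zA => <-.
have el : forall v, v \in A -> liftc r o z l v = lam v.
  move=> v vA; rewrite /liftc /l eqxx.
  case: ifP => [/eqP->|vr]; first lra.
  rewrite (negbTE oz) eqxx.
  case: ifP => [/eqP->|vo]; first lra.
  have vz : v != z by apply: contraNneq zA => <-.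
  by rewrite (negbTE vz) vo.
exists l; split.
- move=> v; rewrite !inE /l => /orP[/eqP->|/andP[vr vA]].
    by rewrite eqxx; have := h0 r rA; lra.
  case: ifP => _; first by have := h0 r rA; lra.
  case: ifP => _; first lra.
  exact: h0.
- by rewrite e1 -h1; apply: eq_fbigr => v vA _; rewrite el.
- by rewrite e2 hx; apply: eq_fbigr => v vA _; rewrite el.
- by rewrite /l (negbTE oz) eqxx.
Qed.

Lemma child_nsimplex (A : {fset pt}) r o z : nsimplex A -> r \in A -> o \in A -> r != o ->
  z \notin A -> z = 2^-1 *: (r + o) -> nsimplex (z |` (A `\ r))%fset.
Proof.
move=> [cA aA] rA oA ro zA hz.
have zA' : z \notin (A `\ r)%fset by rewrite in_fsetD1 negb_and zA orbT.
split.
- by rewrite cardfsU1 zA' -cA (cardfsD1 r A) rA.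
- move=> l s0 s1.
  have [e1 e2] := child_sum l rA oA ro zA hz.
  have h := aA (liftc r o z l); rewrite -e1 -e2 in h.
  have := h s0 s1 => {}h.
  have hr := h r rA; have ho := h o oA.
  rewrite /liftc eqxx in hr; rewrite /liftc (eq_sym o r) (negbTE ro) eqxx in ho.
  have lz : l z = 0 by lra.
  have lo : l o = 0 by lra.
  move=> v; rewrite !inE => /orP[/eqP->//|/andP[vr vA]].
  case: (eqVneq v o) => [->//|vo].
  by have := h v vA; rewrite /liftc (negbTE vr) (negbTE vo).
Qed.

Lemma mid_neq (r o : pt) : r != o -> 2^-1 *: (r + o) != r.
Proof.
move=> ro; apply/eqP => h; move/eqP: ro; apply.
have : 2 *: (2^-1 *: (r + o)) = 2 *: r by rewrite h.
rewrite scalerA mulfV ?scale1r; last by rewrite pnatr_eq0.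
rewrite scaler_nat mulr2n => /addrI.
by [].
Qed.

Lemma fresh (Tr : {fset {fset pt}}) T T2 r o z : conforming Tr -> T \in Tr -> T2 \in Tr ->
  r \in T -> o \in T -> r != o -> z = 2^-1 *: (r + o) -> z \notin T2.
Proof.
move=> [ns cf] TT T2T rT oT ro hz.
apply/negP => zT2.
have zr : z != r by rewrite hz mid_neq.
have zo : z != o by rewrite hz addrC mid_neq // eq_sym.
have [cT aT] := ns T TT.
have [cT2 aT2] := ns T2 T2T.
pose lam v : R := if (v == r) || (v == o) then 2^-1 else 0.
have sro : fsubset [fset r; o]%fset T.
  by apply/fsubsetP => v; rewrite !inE => /orP[]/eqP->.
have lz : forall v, v \in T -> v \notin [fset r; o]%fset -> lam v = 0.
  by move=> v _; rewrite /lam !inE => /negbTE->.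
have s1 : \sum_(v <- T) lam v = 1.
  rewrite -(sum_supp sro lz) sum2 // /lam eqxx /= eqxx orbT; lra.
have s2 : \sum_(v <- T) lam v *: v = z.
  rewrite -(@sumv_supp _ _ _ _ (fun v => lam v *: v) sro); last first.
    by move=> v vT vn; rewrite lz // scale0r.
  by rewrite sum2 // /lam eqxx /= eqxx orbT hz scalerDr.
have cz1 : Defs.conv T z.
  by exists lam; split => //; move=> v _; rewrite /lam; case: ifP => _; lra.
have cz2 : Defs.conv T2 z.
  apply: (@conv_supp _ _ [fset z]%fset T2 (fun v => if v == z then 1 else 0)).
  - by move=> v _; case: ifP.
  - by rewrite big_seq_fset1 eqxx.
  - by rewrite big_seq_fset1 eqxx scale1r.
  - by move=> v; rewrite inE => /eqP->; rewrite zT2.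
have cz : Defs.conv (T `&` T2)%fset z.
  by rewrite -(cf T T2 TT T2T); split.
case: cz => mu [m0 [m1 mx]].
pose mu' v := if v \in (T `&` T2)%fset then mu v else 0.
have sI : fsubset (T `&` T2)%fset T by apply: fsubsetIl.
have mz : forall v, v \in T -> v \notin (T `&` T2)%fset -> mu' v = 0.
  by move=> v _ /negbTE h; rewrite /mu' h.
have t1 : \sum_(v <- T) mu' v = 1.
  rewrite -(sum_supp sI mz) -m1; apply: eq_fbigr => v vI _; by rewrite /mu' vI.
have t2 : \sum_(v <- T) mu' v *: v = z.
  rewrite -(@sumv_supp _ _ _ _ (fun v => mu' v *: v) sI); last first.
    by move=> v vT vn; rewrite mz // scale0r.
  by rewrite mx; apply: eq_fbigr => v vI _; rewrite /mu' vI.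
have U := @coord_uniq _ _ T lam mu' aT (etrans s1 (esym t1)) (etrans s2 (esym t2)).
have inT2 : forall v, v \in T -> lam v = 2^-1 -> v \in T2.
  move=> v vT hv; move: (U v vT); rewrite hv /mu'.
  case: ifP; first by rewrite in_fsetI => /andP[].
  move=> _ h; have : (2^-1 : R) != 0 by rewrite invr_eq0 pnatr_eq0.
  by rewrite h eqxx.
have rT2 : r \in T2 by apply: inT2 => //; rewrite /lam eqxx.
have oT2 : o \in T2 by apply: inT2 => //; rewrite /lam eqxx orbT.
pose k v : R := if v == z then 1 else if (v == r) || (v == o) then - 2^-1 else 0.
have sz : fsubset [fset z; r; o]%fset T2.
  by apply/fsubsetP => v; rewrite !inE => /orP[/orP[]|]/eqP->.
have kz : forall v, v \in T2 -> v \notin [fset z; r; o]%fset -> k v = 0.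
  move=> v _ vn; rewrite /k; case: ifP => [/eqP vz|_]; first by move: vn; rewrite vz !inE eqxx.
  by case: ifP => // /orP[]/eqP vx; move: vn; rewrite vx !inE eqxx ?orbT.
have e1 : \sum_(v <- T2) k v = 0.
  rewrite -(sum_supp sz kz) sum3 // /k !eqxx (eq_sym r z) (negbTE zr) (eq_sym o z) (negbTE zo) /= ?orbT.
  lra.
have e2 : \sum_(v <- T2) k v *: v = 0.
  rewrite -(@sumv_supp _ _ _ _ (fun v => k v *: v) sz); last first.
    by move=> v vT vn; rewrite kz // scale0r.
  rewrite sum3 // /k !eqxx (eq_sym r z) (negbTE zr) (eq_sym o z) (negbTE zo) /= ?orbT.
  by rewrite hz scale1r !scaleNr scalerDr (addrC (2^-1 *: r)) addrK subrr.
have := aT2 k e1 e2 z zT2; rewrite /k eqxx => /eqP.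
by rewrite oner_eq0.
Qed.

End Geo3.

Section Geo4.
Variables (R : realType) (n : nat).
Local Notation pt := 'rV[R]_n.

Lemma coords (Tr : {fset {fset pt}}) A B x : conforming Tr -> A \in Tr -> B \in Tr ->
  Defs.conv A x -> Defs.conv B x ->
  exists mu : pt -> R, [/\ forall v, 0 <= mu v, forall v, v \notin (A `&` B)%fset -> mu v = 0,
    \sum_(v <- A) mu v = 1 /\ x = \sum_(v <- A) mu v *: v &
    \sum_(v <- B) mu v = 1 /\ x = \sum_(v <- B) mu v *: v].
Proof.
move=> [ns cf] AT BT cA cB.
have : Defs.conv (A `&` B)%fset x by rewrite -(cf A B AT BT); split.
case=> m [m0 [m1 mx]].
pose mu v := if v \in (A `&` B)%fset then m v else 0.
have mz : forall v, v \notin (A `&` B)%fset -> mu v = 0 by move=> v /negbTE h; rewrite /mu h.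
have s1 : \sum_(v <- (A `&` B)%fset) mu v = 1.
  by rewrite -m1; apply: eq_fbigr => v vI _; rewrite /mu vI.
have s2 : x = \sum_(v <- (A `&` B)%fset) mu v *: v.
  by rewrite mx; apply: eq_fbigr => v vI _; rewrite /mu vI.
have gen : forall C, fsubset (A `&` B)%fset C ->
    \sum_(v <- C) mu v = 1 /\ x = \sum_(v <- C) mu v *: v.
  move=> C sC; split.
  - by rewrite -(sum_supp sC) // => v _ vn; apply: mz.
  - rewrite -(@sumv_supp _ _ _ _ (fun v => mu v *: v) sC) // => v _ vn.
    by rewrite mz // scale0r.
exists mu; split => //.
- by move=> v; rewrite /mu; case: ifP => // vI; apply: m0.
- by apply: gen; apply: fsubsetIl.
- by apply: gen; apply: fsubsetIr.
Qed.

Lemma child_ineq (A : {fset pt}) r w z x (mu : pt -> R) : aff_indep A ->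
  r \in A -> w \in A -> r != w -> z \notin A -> z = 2^-1 *: (r + w) ->
  Defs.conv (z |` (A `\ r))%fset x ->
  \sum_(v <- A) mu v = 1 -> x = \sum_(v <- A) mu v *: v -> mu r <= mu w.
Proof.
move=> ai rA oA ro zA hz cx s1 s2.
have [lam [l0 l1 lx lro]] := child_conv_sub rA oA ro zA hz cx.
have U := coord_uniq ai (etrans s1 (esym l1)) (etrans (esym s2) lx).
by rewrite !U.
Qed.

Definition childof (z : pt) (A C : {fset pt}) (a b : pt) :=
  exists r w, ((r == a) && (w == b) || (r == b) && (w == a)) /\ C = (z |` (A `\ r))%fset.

Lemma conf_step (Tr Tr' : {fset {fset pt}}) (a b z : pt) :
  conforming Tr -> a != b -> z = 2^-1 *: (a + b) ->
  (forall T1, T1 \in Tr' -> (T1 \in Tr /\ ~~ fsubset [fset a; b]%fset T1) \/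
     exists2 A, (A \in Tr /\ fsubset [fset a; b]%fset A) & childof z A T1 a b) ->
  conforming Tr'.
Proof.
move=> cTr ab hz hTr'.
have [ns cf] := cTr.
have CD : forall A T1, A \in Tr -> fsubset [fset a; b]%fset A -> childof z A T1 a b ->
    exists r w, [/\ r \in A, w \in A, r != w, z \notin A & [/\ z = 2^-1 *: (r + w),
      T1 = (z |` (A `\ r))%fset & (r == a) && (w == b) || (r == b) && (w == a)]].
  move=> A T1 AT sA [r [w [hro ->]]].
  have aA : a \in A by apply: (fsubsetP sA); rewrite !inE eqxx.
  have bA : b \in A by apply: (fsubsetP sA); rewrite !inE eqxx orbT.
  have zA : z \notin A by apply: (fresh cTr AT AT aA bA ab hz).
  exists r, w; move: hro => /orP[]/andP[/eqP-> /eqP->]; (split; last split) => //; rewrite ?eqxx ?orbT //.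
  - by rewrite eq_sym.
  - by rewrite addrC.
have ns' : forall T1, T1 \in Tr' -> nsimplex T1.
  move=> T1 /hTr' [[T1T _]|[A [AT sA] hc]]; first exact: ns.
  have [r [w [rA oA ro zA [hz' -> _]]]] := CD A T1 AT sA hc.
  exact: (child_nsimplex (ns A AT) rA oA ro zA hz').
have cpar : forall A r w x, r \in A -> w \in A -> r != w -> z \notin A -> z = 2^-1 *: (r + w) ->
    Defs.conv (z |` (A `\ r))%fset x -> Defs.conv A x.
  move=> A r w x rA oA ro zA hz' cx.
  have [lam [l0 l1 lx _]] := child_conv_sub rA oA ro zA hz' cx.
  by exists lam.
have mixed : forall A T2 r w x, A \in Tr -> T2 \in Tr -> ~~ fsubset [fset a; b]%fset T2 ->
    r \in A -> w \in A -> r != w -> z \notin A -> z = 2^-1 *: (r + w) ->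
    ((r == a) && (w == b) || (r == b) && (w == a)) ->
    Defs.conv (z |` (A `\ r))%fset x -> Defs.conv T2 x ->
    Defs.conv ((z |` (A `\ r)) `&` T2)%fset x.
  move=> A T2 r w x AT T2T nT2 rA oA ro zA hz' hro c1 c2.
  have cA := cpar A r w x rA oA ro zA hz' c1.
  have [mu [m0 mz [s1 s2] _]] := coords cTr AT T2T cA c2.
  have ineq := child_ineq (ns A AT).2 rA oA ro zA hz' c1 s1 s2.
  have mr : mu r = 0.
    have : (r \notin T2) || (w \notin T2).
      apply: contraR nT2; rewrite negb_or !negbK => /andP[rT oT].
      apply/fsubsetP => v; rewrite !inE.
      by move: hro => /orP[]/andP[/eqP<- /eqP<-] /orP[]/eqP->.
    case/orP => h.
    - by apply: mz; rewrite in_fsetI (negbTE h) andbF.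
    - have := mz w; rewrite in_fsetI (negbTE h) andbF => /(_ isT) h0.
      by have := m0 r; rewrite h0 in ineq; lra.
  apply: (conv_supp (D:=A) (nu:=mu)) => //.
  move=> v vA; rewrite in_fsetI negb_and => /orP[].
  + rewrite !inE negb_or => /andP[_]; rewrite negb_and negbK vA orbF => /eqP->.
    exact: mr.
  + by move=> vT; apply: mz; rewrite in_fsetI (negbTE vT) andbF.
split => // T1 T2 T1T T2T.
apply/seteqP; split; last first.
  move=> x cx; split.
  - by apply: (conv_mono (fsubsetIl T1 T2)).
  - by apply: (conv_mono (fsubsetIr T1 T2)).
move=> x [c1 c2].
case: (hTr' T1 T1T) => [[T1o nT1]|[A [AT sA] hc1]];
  case: (hTr' T2 T2T) => [[T2o nT2]|[B [BT sB] hc2]].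
- by rewrite -(cf T1 T2 T1o T2o).
- have [r [w [rB oB ro zB [hz' E hro]]]] := CD B T2 BT sB hc2.
  rewrite fsetIC E; subst T2.
  exact: (mixed B T1 r w x BT T1o nT1 rB oB ro zB hz' hro c2 c1).
- have [r [w [rA oA ro zA [hz' E hro]]]] := CD A T1 AT sA hc1.
  subst T1.
  exact: (mixed A T2 r w x AT T2o nT2 rA oA ro zA hz' hro c1 c2).
- have [r1 [w1 [rA oA ro1 zA [hz1 E1 hro1]]]] := CD A T1 AT sA hc1.
  have [r2 [w2 [rB oB ro2 zB [hz2 E2 hro2]]]] := CD B T2 BT sB hc2.
  subst T1 T2.
  have cA := cpar A r1 w1 x rA oA ro1 zA hz1 c1.
  have cB := cpar B r2 w2 x rB oB ro2 zB hz2 c2.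
  have [mu [m0 mz [s1 s2] [t1 t2]]] := coords cTr AT BT cA cB.
  have i1 := child_ineq (ns A AT).2 rA oA ro1 zA hz1 c1 s1 s2.
  have i2 := child_ineq (ns B BT).2 rB oB ro2 zB hz2 c2 t1 t2.
  set D := (A `&` B)%fset.
  have sDA : fsubset D A by apply: fsubsetIl.
  have aB : a \in B by apply: (fsubsetP sB); rewrite !inE eqxx.
  have bB : b \in B by apply: (fsubsetP sB); rewrite !inE eqxx orbT.
  have r1B : r1 \in B by move: hro1 => /orP[]/andP[/eqP-> _].
  have o1B : w1 \in B by move: hro1 => /orP[]/andP[_ /eqP->].
  have r1D : r1 \in D by rewrite in_fsetI rA r1B.
  have o1D : w1 \in D by rewrite in_fsetI oA o1B.
  have zD : z \notin D by rewrite in_fsetI negb_and zA.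
  have u1 : \sum_(v <- D) mu v = 1.
    by rewrite (sum_supp sDA) // => v _ vn; apply: mz.
  have u2 : x = \sum_(v <- D) mu v *: v.
    rewrite (@sumv_supp _ _ _ _ (fun v => mu v *: v) sDA) // => v _ vn.
    by rewrite mz // scale0r.
  have [l [l0 l1 lx lo]] := child_conv_sup r1D o1D ro1 zD hz1 (fun v _ => m0 v) u1 u2 i1.
  apply: (conv_supp (D := (z |` (D `\ r1))%fset) (nu := l)) => //.
  move=> v vC' vE.
  have vz : v != z.
    by apply: contraNneq vE => ->; rewrite !inE eqxx.
  move: vC'; rewrite !inE (negbTE vz) /= => /andP[vr1 /andP[vA vB]].
  have vr2 : v = r2.
    apply/eqP; apply: contraNT vE => vr2.
    by rewrite !inE vr1 vA vB vr2 /= !orbT.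
  subst v.
  have e21 : (r2 == w1) && (w2 == r1).
    move: hro1 hro2 vr1.
    by move=> /orP[]/andP[/eqP-> /eqP->] /orP[]/andP[/eqP-> /eqP->]; rewrite ?eqxx //= (negbTE ab) ?(eq_sym b a) ?(negbTE ab).
  move: e21 => /andP[/eqP e1 /eqP e2].
  rewrite e1 lo; move: i2; rewrite e1 e2 => i2; lra.
Qed.

End Geo4.

Section Ref.
Variables (R : realType) (n N : nat).
Hypothesis N0 : (0 < N)%N.
Hypothesis n0 : (0 < n)%N.
Local Notation pt := 'rV[R]_n.

Definition verts (Tr : {fset {fset pt}}) v := exists2 T, T \in Tr & v \in T.
Definition Inv (Tr : {fset {fset pt}}) (g : pt -> int) :=
  conforming Tr /\ forall T, T \in Tr -> Qg N g T.

Lemma card_ns (T : {fset pt}) : nsimplex T -> (2 <= #|`T|)%N.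
Proof. by case=> -> _; rewrite ltnS. Qed.

Lemma in_omega (Tr : {fset {fset pt}}) e T1 : (T1 \in omega Tr e) = (T1 \in Tr) && fsubset e T1.
Proof. by rewrite /omega !inE. Qed.

Lemma bsv2 (g : pt -> int) T a b : bse N g T = [fset a; b]%fset -> a != b ->
  bsv N g T = 2^-1 *: (a + b).
Proof. by move=> E ab; rewrite /bsv E sum2. Qed.

End Ref.

Section Ref2.
Variables (R : realType) (n N : nat).
Hypothesis N0 : (0 < N)%N.
Hypothesis n0 : (0 < n)%N.
Local Notation pt := 'rV[R]_n.

Lemma gsharp_bse_eq (g : pt -> int) A T : Qg N g A -> nsimplex A -> Qg N g T -> nsimplex T ->
  bse N g A = bse N g T -> gsharp N g A = gsharp N g T.
Proof.
move=> [iA _] nA [iT _] nT E.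
have [_ _ eA] := bse_props N iA (card_ns n0 nA).
have [_ _ eT] := bse_props N iT (card_ns n0 nT).
by rewrite -eA -eT E.
Qed.

Lemma bisect_inv (Tr : {fset {fset pt}}) g T : Inv N Tr g -> T \in Tr ->
  (forall T', T' \in omega Tr (bse N g T) -> bse N g T' = bse N g T) ->
  [/\ Inv N (bisect_all N Tr g T) (new_gen N g T),
      (forall v, verts Tr v -> new_gen N g T v = g v),
      (forall v, verts Tr v -> verts (bisect_all N Tr g T) v) &
      (forall T2, T2 \in Tr -> T2 \notin bisect_all N Tr g T -> gsharp N g T2 <= gsharp N g T)].
Proof.
move=> [cTr QTr] TT H.
have [ns cf] := cTr.
have [injT _] := QTr T TT.
have c2T := card_ns n0 (ns T TT).
have [sB cB eB] := bse_props N injT c2T.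
have [a [b [ab Be]]] := card2P cB.
have hz : bsv N g T = 2^-1 *: (a + b) := bsv2 Be ab.
set z := bsv N g T in hz *.
have aT : a \in T by apply: (fsubsetP sB); rewrite Be !inE eqxx.
have bT : b \in T by apply: (fsubsetP sB); rewrite Be !inE eqxx orbT.
have fr : forall T2, T2 \in Tr -> z \notin T2.
  by move=> T2 h; apply: (fresh cTr TT h aT bT ab hz).
have bsvA : forall A, A \in omega Tr (bse N g T) -> bsv N g A = z.
  by move=> A AW; rewrite /z /bsv (H A AW).
have inW : forall A, A \in Tr -> fsubset [fset a; b]%fset A -> A \in omega Tr (bse N g T).
  by move=> A AT sA; rewrite in_omega AT Be.
have memB : forall T1, T1 \in bisect_all N Tr g T ->
    (T1 \in Tr /\ ~~ fsubset [fset a; b]%fset T1) \/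
    exists2 A, (A \in Tr /\ fsubset [fset a; b]%fset A) & childof z A T1 a b.
  move=> T1; rewrite /bisect_all /= in_fsetU in_fsetD in_omega => /orP[/andP[hn hT]|].
    by left; split => //; move: hn; rewrite hT Be.
  move=> /bigfcupP [A /andP[AW _] hc].
  have AW' : A \in omega Tr (bse N g T) by [].
  move: hc; rewrite /children /= (bsvA A AW') (H A AW') Be => /imfsetP [x xB ->].
  right; exists A.
    by move: AW'; rewrite in_omega Be => /andP[].
  move: xB; rewrite !inE => /orP[]/eqP->.
  - by exists a, b; rewrite !eqxx.
  - by exists b, a; rewrite !eqxx orbT.
have conf' := conf_step cTr ab hz memB.
have gA : forall A, A \in omega Tr (bse N g T) -> gsharp N g A = gsharp N g T.
  move=> A AW; have AT : A \in Tr by move: AW; rewrite in_omega => /andP[].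
  by apply: gsharp_bse_eq; rewrite ?(H A AW) //; [apply: QTr | apply: ns | apply: QTr | apply: ns].
have eqg : forall T2, T2 \in Tr -> {in T2, new_gen N g T =1 g}.
  move=> T2 T2T v vT2; rewrite /new_gen -/z.
  have vz : v != z by apply: contraNneq (fr T2 T2T) => <-.
  by rewrite (negbTE vz).
split.
- split => // T1 /memB [[T1T _]|[A [AT sA] [x [y [hxy ->]]]]].
    exact: (Q_ext (fun v vT => esym (eqg T1 T1T v vT)) (card_ns n0 (ns T1 T1T)) (QTr T1 T1T)).
  have AW := inW A AT sA.
  apply: (Q_child N0 (QTr A AT) (card_ns n0 (ns A AT))).
  + by rewrite (H A AW) Be !inE; move: hxy => /orP[]/andP[/eqP-> _]; rewrite eqxx ?orbT.
  + exact: fr A AT.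
  + exact: eqg A AT.
  + by rewrite /new_gen -/z eqxx gA.
- by move=> v [T2 T2T vT2]; apply: (eqg T2).
- move=> v [T2 T2T vT2].
  case: (boolP (T2 \in omega Tr (bse N g T))) => T2W.
  + pose x := if v == a then b else a.
    have xB : x \in bse N g T2 by rewrite (H T2 T2W) Be /x !inE; case: ifP; rewrite eqxx ?orbT.
    have xv : v != x.
      by rewrite /x; case: (eqVneq v a) => [->|va].
    exists (z |` (T2 `\ x))%fset; last by rewrite !inE xv vT2 orbT.
    rewrite /bisect_all /= in_fsetU; apply/orP; right.
    apply/bigfcupP; exists T2; first by rewrite andbT.
    rewrite /children /= (bsvA T2 T2W); apply/imfsetP; exists x => //.
  + exists T2 => //.
    by rewrite /bisect_all /= in_fsetU in_fsetD T2W T2T.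
- move=> T2 T2T; rewrite /bisect_all /= in_fsetU in_fsetD.
  case: (boolP (T2 \in omega Tr (bse N g T))) => T2W; last by rewrite T2T.
  by rewrite (gA T2 T2W).
Qed.

End Ref2.

Section Ref3.
Variables (R : realType) (n N : nat).
Hypothesis N0 : (0 < N)%N.
Hypothesis n0 : (0 < n)%N.
Local Notation pt := 'rV[R]_n.

Lemma Q_gsharp_ext (g1 g2 : pt -> int) T : Qg N g1 T -> nsimplex T -> {in T, g1 =1 g2} ->
  gsharp N g1 T = gsharp N g2 T.
Proof. by move=> [i _] nT e; have [-> _] := gsharp_ext N e i (card_ns n0 nT). Qed.

Lemma refine_inv (Tr : {fset {fset pt}}) g T Tr' g' : refine N Tr g T Tr' g' ->
  Inv N Tr g -> T \in Tr ->
  [/\ Inv N Tr' g', (forall v, verts Tr v -> g' v = g v),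
      (forall v, verts Tr v -> verts Tr' v) &
      (forall T2, T2 \in Tr -> T2 \notin Tr' -> gsharp N g T2 <= gsharp N g T)].
Proof.
elim=> {Tr g T Tr' g'}.
- by move=> Tr g T H I TT; apply: bisect_inv.
- move=> Tr g T T' Tr1 g1 Tr2 g2 T'W ne _ IH1 _ IH2 I TT.
  have [cTr QTr] := I.
  have T'T : T' \in Tr by move: T'W; rewrite in_omega => /andP[].
  have sT' : fsubset (bse N g T) T' by move: T'W; rewrite in_omega => /andP[].
  have [I1 e1 p1 r1] := IH1 I T'T.
  have [iT _] := QTr T TT.
  have [_ cB eB] := bse_props N iT (card_ns n0 (cTr.1 T TT)).
  have [iT' _] := QTr T' T'T.
  have lt : gsharp N g T' < gsharp N g T.
    rewrite -eB; apply: (gsharp_min N0 iT' (card_ns n0 (cTr.1 T' T'T)) sT' cB).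
    by rewrite eq_sym.
  have TT1 : T \in Tr1.
    apply/negPn/negP => h; have := r1 T TT h; rewrite leNgt lt.
    by [].
  have [I2 e2 p2 r2] := IH2 I1 TT1.
  have eT : forall T2, T2 \in Tr -> {in T2, g =1 g1}.
    by move=> T2 T2T v vT2; rewrite e1 //; exists T2.
  split => //.
  + by move=> v hv; rewrite e2 ?e1 //; apply: p1.
  + by move=> v hv; apply: p2; apply: p1.
  + move=> T2 T2T nT2.
    case: (boolP (T2 \in Tr1)) => T21.
    * have := r2 T2 T21 nT2.
      rewrite -(Q_gsharp_ext (QTr T2 T2T) (cTr.1 T2 T2T) (eT T2 T2T)).
      by rewrite -(Q_gsharp_ext (QTr T TT) (cTr.1 T TT) (eT T TT)).
    * by apply: le_trans (ltW lt); apply: r1.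
Qed.

Lemma reach_inv (Tr0 : {fset {fset pt}}) g0 Tr g : reachable N Tr0 g0 Tr g ->
  Inv N Tr0 g0 -> Inv N Tr g.
Proof.
elim=> // Tr1 g1 T Tr' g' _ IH TT hr I0.
by have [] := refine_inv hr (IH I0) TT.
Qed.

Lemma init_inv (Tr0 : {fset {fset pt}}) (c : pt -> 'I_N.+1) :
  triangulation_of_domain Tr0 -> coloring Tr0 c -> Inv N Tr0 (init_gen c).
Proof.
move=> [cTr _] col; split => // T TT.
set g := init_gen c.
have gle : forall v, g v <= 0 by move=> v; rewrite /g /init_gen oppr_le0.
have gge : forall v, - (N%:Z) <= g v.
  move=> v; rewrite /g /init_gen lerN2 lez_nat.
  by rewrite -ltnS ltn_ord.
have inj : {in T &, injective g}.
  move=> x y xT yT; rewrite /g /init_gen => /eqP; rewrite eqr_opp => /eqP [] h.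
  by apply: (col T TT) => //; apply: val_inj.
split => // v vT.
have [sB cB eB] := bse_props N inj (card_ns n0 (cTr.1 T TT)).
have [x [y [xy Be]]] := card2P cB.
rewrite -eB Be.
have pos : forall x y, x != y -> g y < g x -> 0 < gsharp N g [fset x; y]%fset.
  move=> p q pq gpq; rewrite /gsharp edge_spec //.
  have := typ_bnd N0 (g p); have := gge q.
  case: ifP => _ /=; lia.
apply: (le_lt_trans (gle v)).
have gxy : g x != g y.
  apply: contra xy => /eqP h; apply/eqP; apply: inj => //;
  by apply: (fsubsetP sB); rewrite Be !inE eqxx ?orbT.
case: (ltgtP (g x) (g y)) => h; last by move: gxy; rewrite h eqxx.
- by rewrite fsetUC; apply: pos => //; rewrite eq_sym.
- exact: pos.
Qed.

End Ref3.

Unset Implicit Arguments.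

Theorem lemma3p8 (R : realType) (n N : nat) (Tr0 : {fset {fset 'rV[R]_n}})
  (c : 'rV[R]_n -> 'I_N.+1) :
  (2 <= n)%N -> (n <= N)%N ->
  triangulation_of_domain Tr0 -> coloring Tr0 c ->
  forall (Tr : {fset {fset 'rV[R]_n}}) (g : 'rV[R]_n -> int),
    reachable N Tr0 (init_gen c) Tr g ->
    forall T, T \in Tr ->
      (forall e, fsubset e T -> #|` e| = 2%N -> e != bse N g T ->
         gsharp N g e > gsharp N g (bse N g T)) /\
      (forall S, fsubset S T -> (2 <= #|` S|)%N ->
       forall e, fsubset e S -> #|` e| = 2%N -> e != bse N g S ->
         gsharp N g e > gsharp N g (bse N g S)).
Proof.
move=> n2 nN tod col Tr g hr T TT.
have N0 : (0 < N)%N by apply: leq_trans nN; apply: leq_trans n2.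
have n0 : (0 < n)%N by apply: leq_trans n2.
have [cTr QTr] := reach_inv N0 n0 hr (init_inv N0 n0 tod col).
have [iT _] := QTr T TT.
have c2T := card_ns n0 (cTr.1 T TT).
have main : forall S, fsubset S T -> (2 <= #|` S|)%N ->
    forall e, fsubset e S -> #|` e| = 2%N -> e != bse N g S ->
    gsharp N g e > gsharp N g (bse N g S).
  move=> S sS c2 e eS ce ne.
  have iS : {in S &, injective g}.
    by move=> x y xS yS; apply: iT; apply: (fsubsetP sS).
  have [_ _ ->] := bse_props N iS c2.
  exact: gsharp_min.
split => //.
by apply: main => //; apply: fsubset_refl.
Qed.
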